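(* Let $G$ be a graph with edge set $E$, $k\ge1$, suppose $M_k(G)$ is a connected matroid, let $B$ be a base of $M_k(G)$ and $e\in B$, and let $A$ be the component of $G\langle B\rangle$ containing $e$. Suppose $A$ has at least two cycles and $e\in E(\lfloor A\rfloor)$. Then the fundamental cocircuit $K(e,B)$ equals $(E\setminus B)\cup\{e\}$.
   Context: Graphs are finite, may have loops and parallel edges, and have no isolated vertices. A leaf is a vertex incident to exactly one edge, which is not a loop. For $X\subseteq E$, $G\langle X\rangle$ is the subgraph with edge set $X$ and vertex set the vertices incident to $X$. For $k\ge0$, $M_k(G)$ is the matroid on $E$ whose circuits are the inclusion-minimal members of $\{C\subseteq E:C\neq\emptyset,\ |C|=|V(G\langle C\rangle)|+k\}$. A matroid is connected if its ground set has at least two elements and every two elements lie in a common circuit. For a base $B$ and $e\in B$, $K(e,B)$ is the unique cocircuit $K$ with $K\cap B=\{e\}$. For a connected graph $A$ containing a cycle, its kernel $\lfloor A\rfloor$ is the subgraph obtained by repeatedly deleting leaves (with their incident edges) until no leaf remains. *)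

(* Defs.v *)
From mathcomp Require Import all_boot.
Set Implicit Arguments. Unset Strict Implicit. Unset Printing Implicit Defensive.

(* A graph: finite vertex type V, finite edge type E, each edge f has
   endpoints src f and dst f (loops: src f = dst f; parallel edges allowed). *)
Section Graph.
Variables (V E : finType) (src dst : E -> V).

Definition inc (f : E) (v : V) : bool := (src f == v) || (dst f == v).

Definition no_isolated : Prop := forall v : V, exists f : E, inc f v.

Definition Vof (X : {set E}) : {set V} := [set v | [exists f in X, inc f v]].

Definition adj_in (X : {set E}) : rel E :=
  [rel f g | [&& f \in X, g \in X & [exists v, inc f v && inc g v]]].

(* edge set of the component of G<X> containing e *)
Definition component (X : {set E}) (e : E) : {set E} :=
  [set f | connect (adj_in X) e f].

(* degree of v in G<X>, loops counted twice *)
Definition deg_in (X : {set E}) (v : V) : nat :=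
  \sum_(f in X) ((src f == v) + (dst f == v)).

Definition is_cycle (X : {set E}) : bool :=
  [&& X != set0,
      [forall f in X, forall g in X, connect (adj_in X) f g] &
      [forall v in Vof X, deg_in X v == 2]].

Definition is_leaf (X : {set E}) (v : V) : bool :=
  (#|[set f in X | inc f v]| == 1) &&
  [forall f in X, inc f v ==> (src f != dst f)].

Definition strip (X : {set E}) : {set E} :=
  [set f in X | ~~ [exists v, inc f v && is_leaf X v]].

(* kernel: repeat leaf deletion until none remain (#|E| rounds suffice) *)
Definition kernel (X : {set E}) : {set E} := iter #|E| strip X.

Definition Mk_circuit (k : nat) (C : {set E}) : bool :=
  minset (fun D : {set E} => (D != set0) && (#|D| == #|Vof D| + k)) C.

Definition Mk_indep (k : nat) (I : {set E}) : bool :=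
  [forall C : {set E}, Mk_circuit k C ==> ~~ (C \subset I)].

Definition Mk_base (k : nat) (B : {set E}) : bool := maxset (Mk_indep k) B.

(* cocircuit = circuit of the dual = minimal set meeting every base *)
Definition Mk_cocircuit (k : nat) (K : {set E}) : bool :=
  minset (fun D : {set E} =>
            [forall B : {set E}, Mk_base k B ==> (D :&: B != set0)]) K.

Definition Mk_connected (k : nat) : Prop :=
  1 < #|E| /\
  forall x y : E, exists C : {set E}, [/\ Mk_circuit k C, x \in C & y \in C].

End Graph.

(* Main.v *)
Require Import Defs.
From mathcomp Require Import all_boot zify.
Set Implicit Arguments. Unset Strict Implicit. Unset Printing Implicit Defensive.

Section Aux.
Variables (V E : finType) (src dst : E -> V).
Local Notation VO := (Vof src dst).
Local Notation deg := (deg_in src dst).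
Local Notation inc := (inc src dst).
Implicit Types X Y Z W S T K : {set E}.
Implicit Types h g f e : E.
Implicit Types B : {set E}.

Lemma inVO X v : (v \in VO X) = [exists f in X, inc f v].
Proof. by rewrite /Vof inE. Qed.

Lemma VO_inc X f v : f \in X -> inc f v -> v \in VO X.
Proof. by move=> fX fv; rewrite inVO; apply/existsP; exists f; rewrite fX. Qed.

Lemma src_VO X f : f \in X -> src f \in VO X.
Proof. by move=> fX; apply: (VO_inc fX); rewrite /Defs.inc eqxx. Qed.

Lemma dst_VO X f : f \in X -> dst f \in VO X.
Proof. by move=> fX; apply: (VO_inc fX); rewrite /Defs.inc eqxx orbT. Qed.

Lemma VO_sub X Y : X \subset Y -> VO X \subset VO Y.
Proof.
move=> sXY; apply/subsetP => v; rewrite !inVO => /existsP[f /andP[fX fv]].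
by apply/existsP; exists f; rewrite (subsetP sXY).
Qed.

Lemma VOU X Y : VO (X :|: Y) = VO X :|: VO Y.
Proof.
apply/setP => v; rewrite in_setU !inVO; apply/existsP/orP.
  by case=> f /andP[]; rewrite inE => /orP[] fX fv; [left|right];
    apply/existsP; exists f; rewrite fX.
by case=> /existsP[f /andP[fX fv]]; exists f; rewrite inE fX ?orbT.
Qed.


Lemma inVOU1 g Z v : (v \in VO (g |: Z)) = inc g v || (v \in VO Z).
Proof.
rewrite VOU inE; congr (_ || _); rewrite inVO; apply/existsP/idP.
  by case=> f /andP[]; rewrite inE => /eqP->.
by move=> gv; exists g; rewrite inE eqxx.
Qed.

Lemma VO_card1 g Z : (src g \in VO Z) || (dst g \in VO Z) ->
  #|VO (g |: Z)| <= #|VO Z| + 1.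
Proof.
move=> H.
have [y Hy] : exists y, VO (g |: Z) \subset y |: VO Z.
  case/orP: H => H; [exists (dst g) | exists (src g)]; apply/subsetP => v;
  rewrite inVOU1 /Defs.inc in_setU1 => /orP[/orP[]/eqP<-|->]; rewrite ?H ?eqxx ?orbT //.
by apply: (leq_trans (subset_leq_card Hy)); rewrite cardsU1; case: (_ \notin _); lia.
Qed.

Lemma VO_card2 g Z : src g \in VO Z -> dst g \in VO Z ->
  #|VO (g |: Z)| <= #|VO Z|.
Proof.
move=> H1 H2; apply: subset_leq_card; apply/subsetP => v.
by rewrite inVOU1 /Defs.inc => /orP[/orP[]/eqP<-|->].
Qed.

Lemma handshake X : \sum_(v in VO X) deg X v = #|X| * 2.
Proof.
have -> : \sum_(v in VO X) deg X v = \sum_(v : V) deg X v.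
  rewrite [RHS](bigID (mem (VO X))) /= [X in _ = _ + X]big1 ?addn0 //.
  move=> v vX; rewrite /deg_in big1 // => f fX.
  have : ~~ inc f v by apply: contra vX => /(VO_inc fX).
  by rewrite /Defs.inc negb_or => /andP[/negbTE -> /negbTE ->].
rewrite /deg_in exchange_big /= -sum_nat_const; apply: eq_bigr => f _.
have H1 a : \sum_(v : V) (a == v) = 1.
  by rewrite (bigD1 a) //= eqxx big1 // => v /= Hv; rewrite eq_sym (negbTE Hv).
by rewrite big_split /= !H1.
Qed.


Lemma deg_lb X (lb : V -> nat) : (forall v, v \in VO X -> lb v <= deg X v) ->
  \sum_(v in VO X) lb v <= #|X| * 2.
Proof. by move=> H; rewrite -handshake; apply: leq_sum. Qed.

Lemma mindeg2_card X : (forall v, v \in VO X -> 2 <= deg X v) -> #|VO X| <= #|X|.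
Proof. by move=> H; have := deg_lb H; rewrite sum_nat_const; lia. Qed.

Lemma mindeg_x X x : x \in VO X ->
  (forall v, v \in VO X -> (if v == x then 1 else 2) <= deg X v) -> #|VO X| <= #|X|.
Proof.
move=> xX H; have := deg_lb H.
have : \sum_(v in VO X) (if v == x then 1 else 2) + 1 = #|VO X| * 2.
  rewrite -sum_nat_const (bigD1 x) //= eqxx [in RHS](bigD1 x) //=.
  rewrite (eq_bigr (fun _ => 2)); first by lia.
  by move=> v /andP[_ /negbTE ->].
lia.
Qed.

Lemma deg_ge1 X h v : h \in X -> inc h v -> 1 <= deg X v.
Proof.
move=> hX hv; rewrite /deg_in (bigD1 h) //=; apply: leq_trans (leq_addr _ _).
by case/orP: hv => /eqP ->; rewrite eqxx /= ?addn1 ?add1n.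
Qed.

Lemma deg_loop X h v : h \in X -> src h = v -> dst h = v -> 2 <= deg X v.
Proof.
move=> hX hs hd; rewrite /deg_in (bigD1 h) //=; apply: leq_trans (leq_addr _ _).
by rewrite hs hd eqxx.
Qed.

Lemma deg_setD K Z v : v \notin VO Z -> deg (K :\: Z) v = deg K v.
Proof.
move=> vZ; rewrite /deg_in [in RHS](bigID (mem Z)) /= [X in _ = X + _]big1.
  by rewrite add0n; apply: eq_bigl => f; rewrite !inE andbC.
move=> f /andP[_ fZ].
have : ~~ inc f v by apply: contra vZ => /(VO_inc fZ).
by rewrite /Defs.inc negb_or => /andP[/negbTE -> /negbTE ->].
Qed.

Lemma deg_sub K v : 1 <= deg K v -> v \in VO K.
Proof.
rewrite /deg_in; case: (boolP (v \in VO K)) => // vK.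
rewrite big1 // => f fK.
have : ~~ inc f v by apply: contra vK => /(VO_inc fK).
by rewrite /Defs.inc negb_or => /andP[/negbTE -> /negbTE ->].
Qed.

Definition Conn Y := forall Z, Z \subset Y -> Z != set0 -> Z != Y ->
  exists2 g, g \in Y :\: Z & (src g \in VO Z) || (dst g \in VO Z).

Lemma mono Y : Conn Y -> forall Z, Z \subset Y -> Z != set0 ->
  #|Z| + #|VO Y| <= #|Y| + #|VO Z|.
Proof.
move=> cY Z; move Hn: #|Y :\: Z| => n; elim: n Z Hn => [|n IH] Z Hn sZY nZ.
  have: Y :\: Z == set0 by rewrite -cards_eq0 Hn.
  rewrite setD_eq0 => sYZ; have -> : Z = Y by apply/eqP; rewrite eqEsubset sZY.
  by rewrite addnC.
have ZY : Z != Y by apply/eqP => ZY; move: Hn; rewrite ZY setDv cards0.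
have [g] := cY Z sZY nZ ZY; rewrite inE => /andP[gZ gY] Hg.
have := IH (g |: Z).
have e1 : #|Y :\: (g |: Z)| = n.
  move: Hn; rewrite (cardsD1 g (Y :\: Z)) inE gZ gY /=.
  by rewrite setDDl setUC => [[<-]].
have e2 : #|g |: Z| = #|Z| + 1 by rewrite cardsU1 gZ /=; lia.
have := VO_card1 Hg.
have s1 : g |: Z \subset Y by rewrite subUset sub1set gY sZY.
have n1 : g |: Z != set0 by apply/set0Pn; exists g; rewrite setU11.
move=> H1 /(_ e1 s1 n1); lia.
Qed.


Lemma key Y K h S : Conn Y -> K \subset Y ->
  (forall v, v \in VO K -> 2 <= deg K v) -> h \in K ->
  S \subset Y :\ h -> S != set0 ->
  #|S| + #|VO Y| + 1 <= #|Y| + #|VO S|.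
Proof.
move=> cY sKY dK hK sSY nS.
pose P := fun Z => [&& S \subset Z, Z \subset Y :\ h &
                       #|S| + #|VO Z| <= #|Z| + #|VO S|].
have PS : P S by rewrite /P subxx sSY leqnn.
have [Z /maxsetP[PZ maxZ] sSZ] := maxset_exists PS.
move: PZ => /and3P[_ sZY excZ].
have hY : h \in Y by apply: (subsetP sKY).
have hZ : h \notin Z by apply/negP => /(subsetP sZY); rewrite !inE eqxx.
have nZ : Z != set0.
  by case/set0Pn: nS => x xS; apply/set0Pn; exists x; apply: (subsetP sSZ).
have sZY' : Z \subset Y by apply: subset_trans sZY (subsetDl _ _).
have M : forall g, g \in Y -> g != h -> g \notin Z ->
    ~~ ((src g \in VO Z) || (dst g \in VO Z)).
  move=> g gY gh gZ; apply/negP => Hg.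
  have : P (g |: Z).
    apply/and3P; split.
    - by apply: subset_trans sSZ (subsetUr _ _).
    - by rewrite subUset sub1set !inE gh gY sZY.
    - have := VO_card1 Hg; rewrite cardsU1 gZ /=; move: excZ; clear; lia.
  move/maxZ => /(_ (subsetUr _ _)) eq; move: gZ; rewrite -eq setU11 //.
have ZY : Z != Y by apply/eqP => ZY; move: hZ; rewrite ZY hY.
have [g] := cY Z sZY' nZ ZY; rewrite inE => /andP[gZ gY] Hg.
have gh : g = h.
  by apply/eqP; apply: contraTT Hg => gh; apply: M.
subst g.
have nhZ : h |: Z != set0 by apply/set0Pn; exists h; rewrite setU11.
case: (boolP ((src h \in VO Z) && (dst h \in VO Z))) => [/andP[s d]|nboth].
  have := mono cY (Z := h |: Z); rewrite subUset sub1set hY sZY' => /(_ isT nhZ).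
  have := VO_card2 s d; rewrite cardsU1 hZ /=; move: excZ; clear; lia.
have [x [hx xZ xu]] : exists x, [/\ inc h x, x \in VO Z &
     forall v, inc h v -> v \in VO Z -> v = x].
  case/orP: Hg => Hs; [exists (src h) | exists (dst h)]; split => //;
    rewrite /Defs.inc ?eqxx ?orbT // => v /orP[]/eqP <- // H;
    by move: nboth; rewrite Hs H.
pose X2 := K :\: Z.
have hX2 : h \in X2 by rewrite inE hZ hK.
have xX2 : x \in VO X2 by apply: VO_inc hX2 hx.
have dX2 : forall v, v \in VO X2 -> (if v == x then 1 else 2) <= deg X2 v.
  move=> v vX2; case: eqP => [->|nvx]; first by apply: deg_ge1 hX2 hx.
  have vZ : v \notin VO Z.
    apply/negP => vZ; move: vX2; rewrite inVO => /existsP[g /andP[gX2 gv]].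
    move: gX2; rewrite inE => /andP[gZ1 gK].
    case: (eqVneq g h) => [gh|gh].
      by subst g; apply: nvx; apply: xu.
    have := M g (subsetP sKY g gK) gh gZ1.
    by move: gv; rewrite /Defs.inc => /orP[]/eqP ->; rewrite vZ ?orbT.
  rewrite deg_setD //; apply: dK.
  exact: (subsetP (VO_sub (subsetDl K Z)) v vX2).
have cX2 := mindeg_x xX2 dX2.
have := mono cY (Z := Z :|: X2).
have s2 : Z :|: X2 \subset Y by rewrite subUset sZY' (subset_trans (subsetDl _ _) sKY).
have n2 : Z :|: X2 != set0.
  by apply/set0Pn; exists h; rewrite inE hX2 orbT.
move=> /(_ s2 n2).
have d0 : Z :&: X2 = set0.
  by apply/setP => y; rewrite !inE; case: (y \in Z); rewrite ?andbF.
have := cardsUI Z X2; rewrite d0 cards0 addn0 => cU.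
have := cardsUI (VO Z) (VO X2); rewrite -VOU => cV.
have : 1 <= #|VO Z :&: VO X2| by rewrite card_gt0; apply/set0Pn; exists x; rewrite inE xZ xX2.
move: cX2 cU cV excZ; clear; lia.
Qed.


Local Notation strip := (strip src dst).
Local Notation kernel := (kernel src dst).

Lemma strip_sub X : strip X \subset X.
Proof. by apply/subsetP => f; rewrite inE => /andP[]. Qed.

Lemma iter_strip_sub n X : iter n strip X \subset X.
Proof.
elim: n => [|n IH] /=; first exact: subxx.
exact: subset_trans (strip_sub _) IH.
Qed.

Lemma kernel_sub X : kernel X \subset X.
Proof. exact: iter_strip_sub. Qed.

Lemma strip_fix X : strip (kernel X) = kernel X.
Proof.
have H : forall n, strip (iter n strip X) = iter n strip X \/
                   #|iter n strip X| + n <= #|X|.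
  elim=> [|n IH]; first by right; rewrite addn0.
  rewrite /=; set Y := iter n strip X in IH *.
  case: (eqVneq (strip Y) Y) => [eq|ne]; first by left; rewrite !eq.
  right; case: IH => [eq|IH]; first by rewrite eq eqxx in ne.
  have : #|strip Y| < #|Y|.
    rewrite ltnNge; apply: contra ne => le.
    by rewrite eqEcard strip_sub le.
  move: IH; clear; lia.
rewrite /Defs.kernel; case: (H #|E|) => // Hc.
have : #|X| <= #|E| by apply: max_card.
move: Hc; set K := iter _ _ _ => Hc Hm.
have : #|K| = 0 by move: Hc Hm; clear; lia.
move/cards0_eq => ->; apply/eqP; rewrite -subset0; exact: strip_sub.
Qed.

Lemma kernel_mindeg X v : v \in VO (kernel X) -> 2 <= deg (kernel X) v.
Proof.
set K := kernel X; have fixK : strip K = K by exact: strip_fix.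
rewrite inVO => /existsP[f /andP[fK fv]].
case: (leqP 2 #|[set g in K | inc g v]|) => [H2|H1].
  apply: leq_trans H2 _; rewrite -sum1_card.
  have -> : \sum_(g in [set g in K | inc g v]) 1 = \sum_(g in K | inc g v) 1.
    by apply: eq_bigl => g; rewrite inE.
  rewrite /deg_in [X in _ <= X](bigID (fun g => inc g v)) /=.
  apply: leq_trans (leq_addr _ _); apply: leq_sum => g /andP[_].
  by rewrite /Defs.inc => /orP[]/eqP->; rewrite eqxx /= ?addn1 ?add1n.
have c1 : #|[set g in K | inc g v]| == 1.
  have : 0 < #|[set g in K | inc g v]|.
    by rewrite card_gt0; apply/set0Pn; exists f; rewrite inE fK fv.
  move: H1; clear; lia.
move: fK; rewrite -{1}fixK inE => /andP[_ /existsPn /(_ v)].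
rewrite fv /= /is_leaf c1 /= => /forall_inPn [g gK].
rewrite negb_imply negbK => /andP[gv /eqP gl].
apply: (deg_loop gK) => //; move: gv; rewrite /Defs.inc -gl orbb => /eqP //.
Qed.


Lemma path_closed (r : rel E) (a : pred E) :
  (forall x y, r x y -> a x -> a y) -> forall x y, connect r x y -> a x -> a y.
Proof.
move=> H x y /connectP[p pp ->]; elim: p x pp => //= z p IH x /andP[rxz pz] ax.
exact: IH pz (H _ _ rxz ax).
Qed.

Local Notation adj := (adj_in src dst).
Local Notation comp := (component src dst).

Lemma adj_sym X : symmetric (adj X).
Proof.
move=> x y; apply/idP/idP => /and3P[a b /existsP[v /andP[c d]]];
by apply/and3P; split => //; apply/existsP; exists v; rewrite c d.
Qed.

Lemma comp_sub B e : e \in B -> comp B e \subset B.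
Proof.
move=> eB; apply/subsetP => f; rewrite inE => H.
by apply: (path_closed (a := mem B) _ H) => // x y /and3P[].
Qed.

Lemma comp_e B e : e \in comp B e.
Proof. by rewrite inE connect0. Qed.

Lemma comp_conn B e : Conn (comp B e).
Proof.
move=> Z sZA nZ ZA.
case: (boolP [exists g, (g \in comp B e :\: Z) &&
                ((src g \in VO Z) || (dst g \in VO Z))]) =>
   [/existsP[g /andP[g1 g2]]|/existsPn Hn]; first by exists g.
exfalso; case/set0Pn: nZ => z zZ; apply: (negP ZA).
rewrite eqEsubset sZA /=; apply/subsetP => y yA.
have zA := subsetP sZA z zZ.
have czy : connect (adj B) z y.
  have cs := sym_connect_sym (adj_sym B).
  move: zA yA; rewrite !inE => ez ey.
  by apply: connect_trans ey; rewrite cs.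
apply: (path_closed (a := mem Z) _ czy) => //.
move=> x y' axy xZ; apply/negPn/negP => yZ.
move: axy => /and3P[xB yB /existsP[v /andP[xv yv]]].
have := Hn y'; rewrite inE yZ /=.
have -> : y' \in comp B e.
  have xA := subsetP sZA x xZ; move: xA; rewrite !inE => ex.
  by apply: connect_trans ex (connect1 _); apply/and3P; split => //;
     apply/existsP; exists v; rewrite xv yv.
have vZ := VO_inc xZ xv.
by move: yv; rewrite /Defs.inc => /orP[]/eqP ->; rewrite vZ ?orbT.
Qed.


Section Mat.
Variable k : nat.
Local Notation indep := (Mk_indep src dst k).
Local Notation circuit := (Mk_circuit src dst k).

Lemma circ_props C : circuit C -> C != set0 /\ #|C| = #|VO C| + k.
Proof. by move/minsetp/andP=> [-> /eqP]. Qed.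

Lemma circ_notsub X C : indep X -> circuit C -> ~~ (C \subset X).
Proof. by move/forallP/(_ C)/implyP; apply. Qed.

Lemma dep_circ X : ~~ indep X -> exists2 C, circuit C & C \subset X.
Proof.
by move/forallPn => [C]; rewrite negb_imply negbK => /andP[]; exists C.
Qed.

Lemma dep_of_viol X W : W != set0 -> W \subset X -> #|VO W| + k <= #|W| ->
  ~~ indep X.
Proof.
move=> nW sWX hW.
pose P D := (D != set0) && (#|VO D| + k <= #|D|).
have PW : P W by rewrite /P nW hW.
have [D /minsetP[PD minD] sDW] := minset_exists PW.
move: PD => /andP[nD hD].
have eqD : #|D| == #|VO D| + k.
  rewrite eqn_leq hD andbT leqNgt; apply/negP => Hgt.
  case/set0Pn: nD => d dD.
  case: (eqVneq (D :\ d) set0) => [D0|nD0].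
    have c1 := cardsD1 d D; rewrite dD D0 cards0 in c1.
    have : 0 < #|VO D| by rewrite card_gt0; apply/set0Pn; exists (src d); apply: src_VO.
    by move: c1 Hgt; clear; lia.
  have : P (D :\ d).
    rewrite /P nD0 /=.
    have := subset_leq_card (VO_sub (subD1set D d)).
    have := cardsD1 d D; rewrite dD.
    by move: Hgt; clear; lia.
  move/minD => /(_ (subD1set _ _)) eq; move: dD; rewrite -eq setD11 //.
have circD : circuit D.
  apply/minsetP; split; first by rewrite nD eqD.
  move=> D' /andP[nD' eD'] sD'D; apply: minD sD'D.
  by apply/andP; split => //; rewrite (eqP eD').
apply/negP => ind; have := circ_notsub ind circD.
by rewrite (subset_trans sDW sWX).
Qed.

Lemma indep_bound X W : indep X -> W != set0 -> W \subset X -> #|W| < #|VO W| + k.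
Proof.
move=> iX nW sWX; rewrite ltnNge; apply/negP => H.
by have := dep_of_viol nW sWX H; rewrite iX.
Qed.

End Mat.


Lemma main_aux (k : nat) (hk : 1 <= k)
  (B : {set E}) (hB : Mk_base src dst k B) (e : E) (he : e \in B)
  (h2 : exists C1 C2 : {set E},
        [/\ is_cycle src dst C1, is_cycle src dst C2, C1 != C2,
            C1 \subset component src dst B e & C2 \subset component src dst B e])
  (hker : e \in kernel (component src dst B e)) :
  Mk_cocircuit src dst k (~: B :|: [set e]) /\
  (forall K : {set E}, Mk_cocircuit src dst k K -> K :&: B = [set e] ->
     K = ~: B :|: [set e]).
Proof.
set A := comp B e.
have iB : Mk_indep src dst k B := maxsetp hB.
have depBf : forall f, f \notin B -> ~~ Mk_indep src dst k (f |: B).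
  move=> f fB; apply/negP => H.
  have := maxsetsup hB H (subsetUr _ _) => eq.
  by move: fB; rewrite -eq setU11.
have sAB : A \subset B := comp_sub he.
have cA : Conn A by move=> Z; apply: comp_conn.
have eA : e \in A := comp_e B e.
have A1 : #|VO A| + 1 <= #|A|.
  case: h2 => C1 [C2 [c1 c2 ne s1 s2]].
  have cyc : forall C, is_cycle src dst C -> [/\ C != set0,
      forall v, v \in VO C -> 2 <= deg C v & #|VO C| = #|C|].
    move=> C /and3P[nC _ /forall_inP dC].
    have d2 : forall v, v \in VO C -> 2 <= deg C v by move=> v /dC/eqP->.
    split => //.
    have := handshake C.
    rewrite (eq_bigr (fun _ => 2)); last by move=> v /dC/eqP.
    by rewrite sum_nat_const; clear; lia.
  have gen : forall S K h, is_cycle src dst S -> is_cycle src dst K ->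
      S \subset A -> K \subset A -> h \in K -> h \notin S -> #|VO A| + 1 <= #|A|.
    move=> S K h cS cK sS sK hK hS.
    have [nS _ eS] := cyc S cS; have [_ dK _] := cyc K cK.
    have sSA : S \subset A :\ h.
      apply/subsetP => y yS; rewrite in_setD1 (subsetP sS y yS) andbT.
      by apply: contraNneq hS => <-.
    have := key cA sK dK hK sSA nS.
    by rewrite eS; clear; lia.
  case: (boolP (C2 \subset C1)) => s21.
    have : ~~ (C1 \subset C2) by apply: contra ne => s12; rewrite eqEsubset s12 s21.
    by case/subsetPn => h hC1 hC2; apply: (gen C2 C1 h).
  by case/subsetPn: s21 => h hC2 hC1; apply: (gen C1 C2 h).
have ML : forall f, f \notin B -> forall W, W != set0 ->
    W \subset (B :\ e) :|: [set f] -> #|VO W| + k <= #|W| -> False.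
  move=> f fB W nW sW hW.
  have fW : f \in W.
    apply/negPn/negP => fW.
    have sWB : W \subset B.
      apply/subsetP => y yW; move: (subsetP sW y yW).
      rewrite in_setU in_setD1 in_set1 => /orP[/andP[_ ->]//|/eqP yf].
      by subst y; rewrite yW in fW.
    by have := indep_bound iB nW sWB; move: hW; clear; lia.
  set T := W :\ f.
  have cW : #|W| = 1 + #|T| by rewrite (cardsD1 f W) fW.
  have sT : T \subset B :\ e.
    apply/subsetP => y; rewrite /T in_setD1 => /andP[yf yW].
    by move: (subsetP sW y yW); rewrite in_setU in_set1 (negbTE yf) orbF.
  have vT : #|VO T| <= #|VO W| := subset_leq_card (VO_sub (subD1set W f)).
  have nT : T != set0.
    apply/negP => /eqP T0; move: cW; rewrite -/T T0 cards0 => cW.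
    have : 0 < #|VO W| by rewrite card_gt0; apply/set0Pn; exists (src f); apply: src_VO.
    by move: cW hW hk; clear; lia.
  have sTB : T \subset B := subset_trans sT (subD1set _ _).
  have sUB : T :|: A \subset B by rewrite subUset sTB sAB.
  have nU : T :|: A != set0 by apply/set0Pn; exists e; rewrite in_setU eA orbT.
  have := indep_bound iB nU sUB.
  have cU := cardsUI T A.
  have cV := cardsUI (VO T) (VO A); rewrite -VOU in cV.
  have vS : #|VO (T :&: A)| <= #|VO T :&: VO A|.
    by apply: subset_leq_card; rewrite subsetI !VO_sub ?subsetIl ?subsetIr.
  case: (eqVneq (T :&: A) set0) => [S0|nS].
    rewrite S0 cards0 in cU.
    by move: A1 cU cV hW cW vT hk; clear; lia.
  have sSA : T :&: A \subset A :\ e.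
    apply/subsetP => y; rewrite in_setI => /andP[yT yA].
    by move: (subsetP sT y yT); rewrite !in_setD1 yA => /andP[-> _].
  have := key cA (kernel_sub A) (@kernel_mindeg A) hker sSA nS.
  by move: cU cV hW cW vT vS hk; clear; lia.
have indI : forall f, f \notin B -> Mk_indep src dst k ((B :\ e) :|: [set f]).
  move=> f fB; apply/negPn/negP => /dep_circ [C cC sC].
  have [nC hC] := circ_props cC.
  by apply: (ML f fB C nC sC); rewrite hC.
have tight : forall y C, y \notin B -> Mk_circuit src dst k C -> C \subset y |: B ->
    y \in C -> e \in C -> [/\ C :\ y \subset B, e \in C :\ y,
      #|C :\ y| + 1 = #|VO (C :\ y)| + k & VO C \subset VO (C :\ y)].
  move=> y C yB cC sC yC eC.
  have [nC hC] := circ_props cC.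
  have sT : C :\ y \subset B.
    apply/subsetP => z; rewrite in_setD1 => /andP[zy zC].
    by move: (subsetP sC z zC); rewrite in_setU1 (negbTE zy).
  have eT : e \in C :\ y.
    by rewrite in_setD1 eC andbT; apply: contraNneq yB => <-.
  have nT : C :\ y != set0 by apply/set0Pn; exists e.
  have bnd := indep_bound iB nT sT.
  have cC1 := cardsD1 y C; rewrite yC in cC1.
  have vs : VO (C :\ y) \subset VO C := VO_sub (subD1set C y).
  have le : #|VO C| <= #|VO (C :\ y)| by move: bnd cC1 hC; clear; lia.
  have eqV : VO (C :\ y) == VO C by rewrite eqEcard vs le.
  have le2 := subset_leq_card vs.
  split => //; first by move: bnd cC1 hC le le2; clear; lia.
  by rewrite (eqP eqV).
set D := ~: B :|: [set e].
have cocD : Mk_cocircuit src dst k D.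
  apply/minsetP; split.
    apply/forallP => B'; apply/implyP => hB'; apply/negP => /eqP H0.
    have sB' : B' \subset B :\ e.
      apply/subsetP => y yB'.
      have : y \notin D.
        apply/negP => yD; have : y \in D :&: B' by rewrite in_setI yD yB'.
        by rewrite H0 in_set0.
      by rewrite in_setU in_setC in_set1 negb_or negbK in_setD1 => /andP[-> ->].
    have := maxsetsup hB' iB (subset_trans sB' (subD1set _ _)) => eqBB'.
    have : e \in B' by rewrite -eqBB'.
    by move/(subsetP sB'); rewrite in_setD1 eqxx.
  move=> D' PD' sD'D; apply/eqP; rewrite eqEsubset sD'D /=.
  apply/subsetP => f fD; apply/negPn/negP => fD'.
  have PB : forall B', Mk_base src dst k B' -> exists2 x, x \in D' & x \in B'.
    move=> B' hB'; move/forallP: PD' => /(_ B') /implyP /(_ hB') /set0Pn [x].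
    by rewrite in_setI => /andP[]; exists x.
  move: (fD); rewrite in_setU in_setC in_set1 => /orP[fB | /eqP fe].
    have iI := indI f fB.
    have [B' hB' sIB'] := maxset_exists iI.
    have iB' : Mk_indep src dst k B' := maxsetp hB'.
    have [x xD' xB'] := PB B' hB'.
    have xD := subsetP sD'D x xD'.
    have xf : x != f by apply: contraNneq fD' => <-.
    have [Cf cCf sCf] := dep_circ (depBf f fB).
    have [nCf hCf] := circ_props cCf.
    have fCf : f \in Cf.
      apply/negPn/negP => fC.
      have : Cf \subset B.
        apply/subsetP => y yC; move: (subsetP sCf y yC); rewrite in_setU1.
        by case/orP => [/eqP yf|//]; subst y; rewrite yC in fC.
      by apply/negP; apply: circ_notsub iB cCf.
    have eCf : e \in Cf.
      apply/negPn/negP => eC.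
      have : Cf \subset (B :\ e) :|: [set f].
        apply/subsetP => y yC; move: (subsetP sCf y yC); rewrite in_setU1.
        rewrite in_setU in_setD1 in_set1.
        case/orP => [->|yB]; first by rewrite orbT.
        by rewrite yB andbT; apply/orP; left; apply: contraNneq eC => <-.
      by apply/negP; apply: circ_notsub iI cCf.
    move: xD; rewrite in_setU in_setC in_set1 => /orP[xB | /eqP xe].
      have [Cx cCx sCx] := dep_circ (depBf x xB).
      have [nCx hCx] := circ_props cCx.
      have xCx : x \in Cx.
        apply/negPn/negP => xC.
        have : Cx \subset B.
          apply/subsetP => y yC; move: (subsetP sCx y yC); rewrite in_setU1.
          by case/orP => [/eqP yx|//]; subst y; rewrite yC in xC.
        by apply/negP; apply: circ_notsub iB cCx.
      have eCx : e \in Cx.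
        apply/negPn/negP => eC.
        apply: (ML x xB Cx nCx); last by rewrite hCx.
        apply/subsetP => y yC; move: (subsetP sCx y yC); rewrite in_setU1.
        rewrite in_setU in_setD1 in_set1.
        case/orP => [->|yB]; first by rewrite orbT.
        by rewrite yB andbT; apply/orP; left; apply: contraNneq eC => <-.
      have [sTf eTf cTf vTf] := tight f Cf fB cCf sCf fCf eCf.
      have [sTx eTx cTx vTx] := tight x Cx xB cCx sCx xCx eCx.
      set Tf := Cf :\ f in sTf eTf cTf vTf.
      set Tx := Cx :\ x in sTx eTx cTx vTx.
      have sU : Tf :|: Tx \subset B by rewrite subUset sTf sTx.
      have eJ : e \in Tf :&: Tx by rewrite in_setI eTf eTx.
      have nJ : Tf :&: Tx != set0 by apply/set0Pn; exists e.
      have bJ := indep_bound iB nJ (subset_trans (subsetIl _ _) sTf).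
      have cU := cardsUI Tf Tx.
      have cV := cardsUI (VO Tf) (VO Tx); rewrite -VOU in cV.
      have vJ : #|VO (Tf :&: Tx)| <= #|VO Tf :&: VO Tx|.
        by apply: subset_leq_card; rewrite subsetI !VO_sub ?subsetIl ?subsetIr.
      set U := Tf :|: Tx in sU cU cV.
      set W := (U :\ e) :|: [set f; x].
      have sW : W \subset B'.
        apply/subsetP => y; rewrite in_setU in_setD1 in_set2.
        case/orP => [/andP[ye yU]|/orP[]/eqP->//]; last by apply: (subsetP sIB'); rewrite in_setU in_set1 eqxx orbT.
        apply: (subsetP sIB'); rewrite in_setU in_setD1 ye (subsetP sU y yU) //.
      have nW : W != set0 by apply/set0Pn; exists f; rewrite in_setU in_set2 eqxx orbT.
      have vW : VO W \subset VO U.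
        apply/subsetP => v; rewrite inVO => /existsP[g /andP[gW gv]].
        move: gW; rewrite in_setU in_setD1 in_set2.
        case/orP => [/andP[_ gU]|/orP[]/eqP gE]; first exact: VO_inc gU gv.
          rewrite gE in gv; have := subsetP vTf v (VO_inc fCf gv).
          by apply/subsetP/VO_sub/subsetUl.
        rewrite gE in gv; have := subsetP vTx v (VO_inc xCx gv).
        by apply/subsetP/VO_sub/subsetUr.
      have i0 : #|(U :\ e) :&: [set f; x]| = 0.
        apply/eqP; rewrite cards_eq0; apply/eqP/setP => y.
        rewrite in_setI in_set2 in_set0; apply/negP => /andP[yU /orP[]/eqP yq];
        subst y; move: yU; rewrite in_setD1 => /andP[_ /(subsetP sU)];
        by [rewrite (negbTE fB) | rewrite (negbTE xB)].
      have cW : #|W| = #|U :\ e| + 2.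
        rewrite /W; have := cardsUI (U :\ e) [set f; x].
        by rewrite i0 addn0 cards2 eq_sym xf => ->.
      have cE := cardsD1 e U; rewrite in_setU eTf /= in cE.
      have lW := subset_leq_card vW.
      have H : #|VO W| + k <= #|W|.
        by move: lW cW cE cU cV vJ bJ cTf cTx; clear; lia.
      by move: (dep_of_viol nW sW H); rewrite iB'.
    have : Cf \subset B'.
      apply/subsetP => y yC; move: (subsetP sCf y yC); rewrite in_setU1.
      case/orP => [/eqP ->|yB]; first by apply: (subsetP sIB'); rewrite in_setU in_set1 eqxx orbT.
      case: (eqVneq y e) => [->|ye]; first by rewrite -xe.
      by apply: (subsetP sIB'); rewrite in_setU in_setD1 ye yB.
    by apply/negP; apply: circ_notsub iB' cCf.
  subst f.
  have [x xD' xB] := PB B hB.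
  have := subsetP sD'D x xD'; rewrite in_setU in_setC in_set1 xB /= => /eqP xe.
  by subst x; rewrite xD' in fD'.
split => // K cK KB.
have [_ minD] := minsetP cocD.
apply: minD; first exact: minsetp cK.
apply/subsetP => y yK; rewrite in_setU in_setC in_set1.
case: (boolP (y \in B)) => //= yB.
have : y \in K :&: B by rewrite in_setI yK yB.
by rewrite KB in_set1.
Qed.

End Aux.

Theorem mainTheorem20 (V E : finType) (src dst : E -> V)
  (hG : no_isolated src dst) (k : nat) (hk : 1 <= k)
  (hconn : Mk_connected src dst k)
  (B : {set E}) (hB : Mk_base src dst k B) (e : E) (he : e \in B)
  (h2 : exists C1 C2 : {set E},
        [/\ is_cycle src dst C1, is_cycle src dst C2, C1 != C2,
            C1 \subset component src dst B e & C2 \subset component src dst B e])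
  (hker : e \in kernel src dst (component src dst B e)) :
  Mk_cocircuit src dst k (~: B :|: [set e]) /\
  (forall K : {set E}, Mk_cocircuit src dst k K -> K :&: B = [set e] ->
     K = ~: B :|: [set e]).
Proof. exact: (@main_aux V E src dst k hk B hB e he h2 hker). Qed.
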